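(* Let $\mathcal D[t]\subset\mathcal H\subset\mathcal D^\times[t^\times]$ be a rigged Hilbert space with $\mathcal D[t]$ reflexive, $(X,\mu)$ a $\sigma$-finite measure space, $\omega,\theta:X\to\mathcal D^\times$ weakly measurable maps and $m:X\to\mathbb C$ measurable such that $D(M_{m,\omega,\theta})=\mathcal D$. (i) If there is $J\in\mathcal L(\mathcal D)$ with $M_{m,\omega,\theta}Jf=f$ for all $f\in\mathcal D$, then the map $\rho:X\to\mathcal D^\times$, $\rho_x=J^\times(\overline{m(x)}\omega_x)$, satisfies $\langle f,g\rangle=\int_X\langle f,\rho_x\rangle\langle\theta_x,g\rangle d\mu$ for all $f,g\in\mathcal D$. (ii) If there is $K\in\mathcal L(\mathcal D^\times)$ with $KM_{m,\omega,\theta}f=f$ for all $f\in\mathcal D$, then the map $\tau:X\to\mathcal D^\times$, $\tau_x=K(m(x)\theta_x)$, satisfies $\langle f,g\rangle=\int_X\langle f,\omega_x\rangle\langle\tau_x,g\rangle d\mu$ for all $f,g\in\mathcal D$.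
   Context: Rigged Hilbert space: $\mathcal D$ dense subspace of Hilbert space $\mathcal H$ with a locally convex topology $t$ finer than the norm topology, $\mathcal D^\times$ its conjugate dual with strong dual topology, $\mathcal H\subset\mathcal D^\times$, the pairing $\langle F,f\rangle$ extends the inner product, and $\langle f,F\rangle:=\overline{\langle F,f\rangle}$. $\omega$ weakly measurable means $x\mapsto\langle f,\omega_x\rangle$ is measurable for each $f\in\mathcal D$. Distribution multiplier $M_{m,\omega,\theta}$: its domain is the set of $f\in\mathcal D$ such that $\int_X m(x)\langle f,\omega_x\rangle\langle\theta_x,g\rangle d\mu$ converges for all $g\in\mathcal D$ and defines a functional of $g$ bounded in the $\mathcal H$-norm; $M_{m,\omega,\theta}f\in\mathcal H$ is the Riesz representative: $\langle M_{m,\omega,\theta}f,g\rangle=\int_X m(x)\langle f,\omega_x\rangle\langle\theta_x,g\rangle d\mu$. $\mathcal L(\mathcal D)$ (resp. $\mathcal L(\mathcal D^\times)$) is the algebra of continuous linear operators on $\mathcal D[t]$ (resp. $\mathcal D^\times[t^\times]$). For $J\in\mathcal L(\mathcal D)$, $J^\times\in\mathcal L(\mathcal D^\times)$ is the adjoint: $\langle F,Jg\rangle=\langle J^\times F,g\rangle$ for $F\in\mathcal D^\times,g\in\mathcal D$; similarly $K\in\mathcal L(\mathcal D^\times)$ has adjoint $K^\times\in\mathcal L(\mathcal D)$. *)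

(* Defs.v *)
From HB Require Import structures.
From mathcomp Require Import all_boot all_order all_algebra.
From mathcomp Require Import all_classical all_reals all_analysis.
From mathcomp Require Import complex.

Set Implicit Arguments.
Unset Strict Implicit.
Unset Printing Implicit Defensive.

Import Order.TTheory GRing.Theory Num.Theory numFieldNormedType.Exports.
Local Open Scope classical_set_scope.
Local Open Scope complex_scope.
Local Open Scope ring_scope.

(*  - D^× : continuous conjugate-linear functionals F : D -> C; the pairing  *)
(*        is <F, f> := F f, and <f, F> := conj (F f).                         *)
(*  - H : completion of D for an inner product ip on D (linear in the first  *)
(*        argument) such that t is finer than the norm topology; u in H is   *)
(*        identified (Riesz) with the element g |-> <u, g> of D^×.            *)
(*  - J^× F := F \o J  (since <J^× F, g> = <F, J g>).                         *)

Section RiggedHilbert.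
Variables (R : realType) (D : tvsType R[i]).
Local Notation C := R[i].

Definition conj_linear (F : D -> C) :=
  forall (a : C) (f g : D), F (a *: f + g) = conjc a * F f + F g.

Definition in_dual (F : D -> C) := conj_linear F /\ continuous (F : D -> C^o).

Definition tbounded (B : set D) :=
  forall U : set D, nbhs (0 : D) U ->
    exists s : R, 0 < s /\
      forall r : R, s < r -> B `<=` [set (r%:C) *: u | u in U].

(* strongly bounded subsets of D^× : bounded for the strong topology t^×,
   whose neighbourhoods of 0 have as basis
   [set F | forall f, B f -> `|F f| <= e], B bounded in D, e > 0 *)
Definition sbounded (S : set (D -> C)) :=
  (forall F, S F -> in_dual F) /\
  forall (B : set D) (e : R), tbounded B -> 0 < e ->
    exists s : R, 0 < s /\ forall r : R, s < r ->
      forall F, S F -> forall f, B f -> `|F f| <= (r * e)%:C.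

Definition strong_continuous (K : (D -> C) -> (D -> C)) :=
  forall F0, in_dual F0 ->
  forall (B : set D) (e : R), tbounded B -> 0 < e ->
    exists (B' : set D) (d : R), [/\ tbounded B', 0 < d &
      forall F, in_dual F ->
        (forall f, B' f -> `|F f - F0 f| <= d%:C) ->
        forall f, B f -> `|K F f - K F0 f| <= e%:C].

Definition strong_bidual (Phi : (D -> C) -> C) :=
  (forall (a : C) F G, in_dual F -> in_dual G ->
     Phi (fun f => a * F f + G f) = conjc a * Phi F + Phi G) /\
  (forall F0, in_dual F0 -> forall e : R, 0 < e ->
     exists (B : set D) (d : R), [/\ tbounded B, 0 < d &
       forall F, in_dual F ->
         (forall f, B f -> `|F f - F0 f| <= d%:C) ->
         `|Phi F - Phi F0| <= e%:C]).

(* D[t] is reflexive: the canonical map f |-> (F |-> <f, F> = conj (F f))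
   from D[t] into the strong bidual is onto, and t coincides with the
   strong topology beta(D, D^×) (uniform convergence on strongly bounded
   subsets of D^×). *)
Definition reflexive_tvs :=
  (forall Phi, strong_bidual Phi ->
     exists f : D, forall F, in_dual F -> Phi F = conjc (F f)) /\
  (forall (f0 : D) (U : set D),
     nbhs f0 U <->
     exists (S : set (D -> C)) (e : R), [/\ sbounded S, 0 < e &
        [set f | forall F, S F -> `|F (f - f0)| <= e%:C] `<=` U]).

Definition LD (J : D -> D) :=
  (forall (a : C) (f g : D), J (a *: f + g) = a *: J f + J g) /\ continuous J.

Definition LDx (K : (D -> C) -> (D -> C)) :=
  [/\ forall F, in_dual F -> in_dual (K F),
      forall (a : C) F G, in_dual F -> in_dual G ->
        K (fun f => a * F f + G f) = (fun f => a * K F f + K G f)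
    & strong_continuous K].

Definition dual_adj (J : D -> D) (F : D -> C) : D -> C := fun g => F (J g).

Definition dual_scale (a : C) (F : D -> C) : D -> C := fun g => a * F g.

Definition is_inner (ip : D -> D -> C) :=
  [/\ forall (a : C) f g h, ip (a *: f + g) h = a * ip f h + ip g h,
      forall f g, ip g f = conjc (ip f g),
      forall f, 0 <= complex.Re (ip f f)
    & forall f, ip f f = 0 -> f = 0].

Definition hnorm (ip : D -> D -> C) (f : D) : R := Num.sqrt (complex.Re (ip f f)).

(* D ⊂ H ⊂ D^× is a rigged Hilbert space: H is the completion of (D, ip)
   (so D is dense in H) and t is finer than the norm topology of H on D. *)
Definition rigged (ip : D -> D -> C) :=
  is_inner ip /\
  forall (f0 : D) (e : R), 0 < e -> nbhs f0 [set f | hnorm ip (f - f0) < e].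

End RiggedHilbert.

Section ComplexIntegral.
Context {R : realType} {d : measure_display} {X : measurableType d}.
Local Notation C := R[i].

Definition cmeasurable (h : X -> C) :=
  measurable_fun setT (fun x => complex.Re (h x)) /\
  measurable_fun setT (fun x => complex.Im (h x)).

Variable mu : {measure set X -> \bar R}.

Definition cintegrable (h : X -> C) :=
  mu.-integrable setT (EFin \o (fun x => complex.Re (h x))) /\
  mu.-integrable setT (EFin \o (fun x => complex.Im (h x))).

Definition cint (h : X -> C) : C :=
  Complex (Rintegral mu setT (fun x => complex.Re (h x)))
          (Rintegral mu setT (fun x => complex.Im (h x))).

End ComplexIntegral.

Section Multiplier.
Context {R : realType} {D : tvsType R[i]}
        {d : measure_display} {X : measurableType d}.
Local Notation C := R[i].

Definition weakly_measurable (w : X -> D -> C) :=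
  forall f : D, cmeasurable (fun x => conjc (w x f)).

Variable mu : {measure set X -> \bar R}.

Definition mult_integrand (m : X -> C) (w th : X -> D -> C) (f g : D) :=
  fun x => m x * conjc (w x f) * th x g.

Definition in_mult_dom (ip : D -> D -> C) (m : X -> C) (w th : X -> D -> C)
    (f : D) :=
  (forall g, cintegrable mu (mult_integrand m w th f g)) /\
  exists c : R, forall g,
    `|cint mu (mult_integrand m w th f g)| <= (c * hnorm ip g)%:C.

(* M_{m,omega,theta} f, as an element of H ⊂ D^× : g |-> <M f, g> *)
Definition mult (m : X -> C) (w th : X -> D -> C) (f : D) : D -> C :=
  fun g => cint mu (mult_integrand m w th f g).

End Multiplier.

(* Main.v *)
Require Import Defs.
From HB Require Import structures.
From mathcomp Require Import all_boot all_order all_algebra.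
From mathcomp Require Import all_classical all_reals all_analysis.
From mathcomp Require Import complex.
From mathcomp Require Import ring lra.
Import Order.TTheory GRing.Theory Num.Theory numFieldNormedType.Exports.
Local Open Scope classical_set_scope.
Local Open Scope complex_scope.
Local Open Scope ring_scope.

Section L.
Context {R : realType} {d : measure_display} {X : measurableType d}.
Variable mu : {measure set X -> \bar R}.

Lemma RintL3 (a b : R) (u v w : X -> R) :
  mu.-integrable setT (EFin \o u) -> mu.-integrable setT (EFin \o v) ->
  mu.-integrable setT (EFin \o w) ->
  mu.-integrable setT (EFin \o (fun x => a * u x + b * v x + w x)) /\
  Rintegral mu setT (fun x => a * u x + b * v x + w x) =
  a * Rintegral mu setT u + b * Rintegral mu setT v + Rintegral mu setT w.
Proof.
move=> iu iv iw.
have iau : mu.-integrable setT (EFin \o (fun x => a * u x)).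
  by apply: (eq_integrable measurableT) (integrableZl measurableT a iu) => x _ /=; rewrite EFinM.
have ibv : mu.-integrable setT (EFin \o (fun x => b * v x)).
  by apply: (eq_integrable measurableT) (integrableZl measurableT b iv) => x _ /=; rewrite EFinM.
have i2 : mu.-integrable setT (EFin \o (fun x => a * u x + b * v x)).
  by apply: (eq_integrable measurableT) (integrableD measurableT iau ibv) => x _ /=; rewrite EFinD.
split.
  by apply: (eq_integrable measurableT) (integrableD measurableT i2 iw) => x _ /=; rewrite EFinD.
rewrite RintegralD // RintegralD // !RintegralZl //.
Qed.

Lemma cintL (b : R[i]) (h1 h2 : X -> R[i]) :
  cintegrable mu h1 -> cintegrable mu h2 ->
  cintegrable mu (fun x => b * h1 x + h2 x) /\
  cint mu (fun x => b * h1 x + h2 x) = b * cint mu h1 + cint mu h2.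
Proof.
move=> [r1 i1] [r2 i2].
have ReE : forall x, complex.Re (b * h1 x + h2 x) =
  complex.Re b * complex.Re (h1 x) + (- complex.Im b) * complex.Im (h1 x) + complex.Re (h2 x).
  by move=> x; case: b => ? ?; case: (h1 x) => ? ?; case: (h2 x) => ? ? /=; ring.
have ImE : forall x, complex.Im (b * h1 x + h2 x) =
  complex.Re b * complex.Im (h1 x) + complex.Im b * complex.Re (h1 x) + complex.Im (h2 x).
  by move=> x; clear ReE; case: b => ? ?; case: (h1 x) => ? ?; case: (h2 x) => ? ? /=; ring.
have [A1 A2] := RintL3 (complex.Re b) (- complex.Im b) _ _ _ r1 i1 r2.
have [B1 B2] := RintL3 (complex.Re b) (complex.Im b) _ _ _ i1 r1 i2.
split; first split.
- by apply: (eq_integrable measurableT) A1 => x _ /=; rewrite ReE.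
- by apply: (eq_integrable measurableT) B1 => x _ /=; rewrite ImE.
rewrite /cint (eq_Rintegral _ (fun x _ => ReE x)) (eq_Rintegral _ (fun x _ => ImE x)) A2 B2.
by clear ReE ImE A1 A2 B1 B2; case: b => ? ? /=; apply/eqP; rewrite eq_complex /=; apply/andP; split; apply/eqP; ring.
Qed.
End L.
Lemma tb1 (R : realType) (D : tvsType R[i]) (g : D) : tbounded [set g].
Proof.
move=> U U0.
have := @scale_continuous R[i] D (0, g) U; rewrite /= scale0r => /(_ U0).
case=> /= [[A B] [/= nA nB] sub].
move/nbhs_ballP: nA => [e /= e0 He].
have ei0 : 0 < e^-1 by rewrite invr_gt0.
have eiE : e^-1 = (complex.Re (e^-1))%:C.
  have := ger0_Im (ltW ei0); case: (e^-1) => a b /= ->; done.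
exists (complex.Re (e^-1)); split.
  by rewrite -ltcR -eiE.
move=> r sr _ ->.
have r0 : 0 < r%:C by rewrite ltcR; apply: lt_trans sr; rewrite -ltcR -eiE.
exists ((r%:C)^-1 *: g); last first.
  by rewrite scalerA mulfV ?scale1r // gt_eqF.
have := sub ((r%:C)^-1, g); apply => /=; split => //; last exact: nbhs_singleton.
apply: He; rewrite /ball /= sub0r normrN ger0_norm; last by rewrite invr_ge0 ltW.
rewrite invf_plt ?posrE //; rewrite eiE ltcR //.
Qed.
Lemma conjcD' (R : realType) (x y : R[i]) : conjc (x + y) = conjc x + conjc y.
Proof. exact: rmorphD. Qed.
Lemma conjcM' (R : realType) (x y : R[i]) : conjc (x * y) = conjc x * conjc y.
Proof. exact: rmorphM. Qed.
Lemma conjcB' (R : realType) (x y : R[i]) : conjc (x - y) = conjc x - conjc y.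
Proof. exact: rmorphB. Qed.

Lemma Kadj (R : realType) (D : tvsType R[i]) (K : (D -> R[i]) -> (D -> R[i])) :
  reflexive_tvs D -> LDx K -> forall g : D,
  exists g' : D, forall F, in_dual F -> K F g = F g'.
Proof.
move=> [refl _] [_ Klin Kc] g.
have [f Hf] : exists f : D, forall F, in_dual F -> conjc (K F g) = conjc (F f).
  apply: refl; split.
    move=> a F G hF hG; rewrite Klin //= conjcD' conjcM'; done.
  move=> F0 hF0 e e0.
  have [B' [dd [tB d0 H]]] := Kc F0 hF0 [set g] e (@tb1 R D g) e0.
  exists B', dd; split => // F hF hB.
  by rewrite -conjcB' normcJ; apply: H.
exists f => F hF; apply: (can_inj (@conjcK R)); exact: Hf.
Qed.
Lemma mult_dual (R : realType) (D : tvsType R[i]) (d : measure_display) (X : measurableType d)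
  (mu : {measure set X -> \bar R}) (ip : D -> D -> R[i]) (m : X -> R[i])
  (w th : X -> D -> R[i]) (f : D) :
  rigged ip -> (forall x, in_dual (th x)) -> in_mult_dom mu ip m w th f ->
  in_dual (mult mu m w th f).
Proof.
move=> [_ rig] hth [hint [c hc]].
have lin : conj_linear (mult mu m w th f).
  move=> a g h; rewrite /mult.
  have -> : mult_integrand m w th f (a *: g + h) =
     (fun x => a^* * mult_integrand m w th f g x + mult_integrand m w th f h x).
    apply: funext => x; rewrite /mult_integrand (hth x).1; ring.
  exact: (cintL mu (a^*) _ _ (hint g) (hint h)).2.
split => // g0.
apply/cvgrPdist_le => e e0.
have eE : e = (complex.Re e)%:C.
  have := ger0_Im (ltW e0); case: e {e0} => a b /= ->; done.
have eR0 : 0 < complex.Re e by rewrite -ltcR -eE.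
set c' := `|c| + 1.
have c'0 : 0 < c' by rewrite /c'; apply: ltr_pwDr => //; exact: normr_ge0.
apply: filterS (rig g0 (complex.Re e / c') _); last by rewrite divr_gt0.
move=> t /= ht.
have -> : mult mu m w th f g0 - mult mu m w th f t = - mult mu m w th f (t - g0).
  have -> : t - g0 = (-1) *: g0 + t by rewrite scaleN1r addrC.
  have cN1 : ((-1 : R[i])^*)%C = -1 by rewrite rmorphN1.
  by rewrite lin cN1 mulN1r opprD opprK addrC.
rewrite normrN; apply: le_trans (hc (t - g0)) _.
have hn0 : 0 <= hnorm ip (t - g0) by rewrite /hnorm sqrtr_ge0.
rewrite eE lecR; apply: le_trans (_ : c' * hnorm ip (t - g0) <= _).
  apply: ler_wpM2r => //; rewrite /c'; apply: le_trans (ler_norm c) _; rewrite lerDl.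
  done.
by rewrite -ler_pdivlMl // mulrC ltW.
Qed.

Lemma scale_dual (R : realType) (D : tvsType R[i]) (a : R[i]) (F : D -> R[i]) :
  in_dual F -> in_dual (dual_scale a F).
Proof.
move=> [Fl Fc]; split.
  by move=> b f g; rewrite /dual_scale Fl; ring.
move=> g0; rewrite /dual_scale.
apply: cvgM; [exact: cvg_cst | exact: Fc].
Qed.

Theorem theorem3p3 (R : realType) (D : tvsType R[i]) (ip : D -> D -> R[i])
    (d : measure_display) (X : measurableType d)
    (mu : {measure set X -> \bar R})
    (omega theta : X -> D -> R[i]) (m : X -> R[i]) :
  rigged ip -> reflexive_tvs D -> sigma_finite setT mu ->
  (forall x, in_dual (omega x)) -> (forall x, in_dual (theta x)) ->
  weakly_measurable omega -> weakly_measurable theta -> cmeasurable m ->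
  (forall f : D, in_mult_dom mu ip m omega theta f) ->
  (* (i) *)
  (forall J : D -> D, LD J ->
     (forall f g : D, mult mu m omega theta (J f) g = ip f g) ->
     let rho := fun x => dual_adj J (dual_scale (conjc (m x)) (omega x)) in
     forall f g : D,
       cintegrable mu (fun x => conjc (rho x f) * theta x g) /\
       ip f g = cint mu (fun x => conjc (rho x f) * theta x g)) /\
  (* (ii) *)
  (forall K : (D -> R[i]) -> (D -> R[i]), LDx K ->
     (forall f g : D, K (mult mu m omega theta f) g = ip f g) ->
     let tau := fun x => K (dual_scale (m x) (theta x)) in
     forall f g : D,
       cintegrable mu (fun x => conjc (omega x f) * tau x g) /\
       ip f g = cint mu (fun x => conjc (omega x f) * tau x g)).
Proof.
move=> rig refl _ hw hth _ _ _ hdom; split.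
  move=> J _ HJ rho f g.
  have E : (fun x => conjc (rho x f) * theta x g) = mult_integrand m omega theta (J f) g.
    apply: funext => x; rewrite /rho /dual_adj /dual_scale /mult_integrand.
    move: (m x) (omega x (J f)) => a b; rewrite conjcM' conjcK //.
  rewrite E; split; first exact: (hdom (J f)).1.
  by rewrite -HJ.
move=> K hK HK tau f g.
have [g' Hg'] := @Kadj R D K refl hK g.
have E : (fun x => conjc (omega x f) * tau x g) = mult_integrand m omega theta f g'.
  apply: funext => x; rewrite /tau Hg'; last exact: scale_dual.
  rewrite /dual_scale /mult_integrand; ring.
rewrite E; split; first exact: (hdom f).1.
rewrite -HK Hg' //; exact: (@mult_dual _ _ _ _ _ _ _ _ _ _ rig hth (hdom f)).
Qed.
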